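(* Let $M/K$ be obtained by strong cluster magnification from a subextension $L/K$ through the finite Galois extension $F/K$, and assume $t_K(L)\ne1$. Then: (1) a field $F'$ is the unique subfield of $M$ Galois over $K$ of maximum degree if and only if $F'=F_1F$, where $F_1$ is the unique subfield of $L$ Galois over $K$ of maximum degree; (2) for fields $F_1,\dots,F_k\subseteq L$, the chain $K\subsetneq F_1\subsetneq\cdots\subsetneq F_k$ is the unique ascending chain for $L/K$ if and only if $K\subsetneq F_1F\subsetneq\cdots\subsetneq F_kF$ is the unique ascending chain for $M/K$.
   Context: $K$ is a perfect field with a fixed algebraic closure $\bar K$; all extensions finite inside $\bar K$; $\tilde L$ is the Galois closure of $L/K$. Strong cluster magnification: $M/K$ is obtained by strong cluster magnification from $L/K$ ($K\subseteq L\subseteq M$) through $F/K$ if $[L:K]>2$, $F/K$ is finite Galois, $\tilde L$ and $F$ are linearly disjoint over $K$, and $LF=M$. For a base field $E$ and finite $P/E$, the ascending index $t_E(P)=[F_P:E]$ where $F_P$ is the unique subfield of $P$ Galois over $E$ of maximum degree. The unique ascending chain of $P/E$ is $E=F_0\subsetneq F_1\subsetneq\cdots\subsetneq F_k$ where each $F_i$ is the unique subfield of $P$ Galois over $F_{i-1}$ of maximum degree, stopping at the first $F_k$ with $t_{F_k}(P)=1$. *)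

(* Defs.v *)
From HB Require Import structures.
From mathcomp Require Import all_boot all_order all_algebra all_fingroup all_field.
Set Implicit Arguments. Unset Strict Implicit. Unset Printing Implicit Defensive.
Import GRing.Theory.
Local Open Scope ring_scope.

Definition perfect_field (K : fieldType) : Prop :=
  forall p, p \in [pchar K] -> forall x : K, exists y : K, y ^+ p = x.

Section Defs.
Variables (K : fieldType) (Om : splittingFieldType K).
Implicit Types E P X F L : {subfield Om}.

Definition is_galois_closure E L (Lt : {subfield Om}) : Prop :=
  [/\ (L <= Lt)%VS, galois E Lt &
      forall Y : {subfield Om}, (L <= Y)%VS -> galois E Y -> (Lt <= Y)%VS].

Definition lin_disjoint E (A B : {subfield Om}) : Prop :=
  [/\ (E <= A)%VS, (E <= B)%VS &
      \dim_E (A * B)%AS = (\dim_E A * \dim_E B)%N].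

Definition is_max_galois_sub E P X : Prop :=
  [/\ (X <= P)%VS, galois E X &
      forall Y : {subfield Om}, (Y <= P)%VS -> galois E Y ->
        (\dim_E Y <= \dim_E X)%N].

Definition ascending_index E P (n : nat) : Prop :=
  exists X, is_max_galois_sub E P X /\ \dim_E X = n.

(* strong cluster magnification: M/K from L/K through F/K, with K = 1%AS *)
Definition strong_cluster_magnification (L F M : {subfield Om}) : Prop :=
  [/\ (2 < \dim_(1%AS : {subfield Om}) L)%N,
      galois 1%AS F,
      (exists Lt, is_galois_closure 1%AS L Lt /\ lin_disjoint 1%AS Lt F) &
      (L * F)%AS = M].

(* E = F_0 ⊊ F_1 ⊊ ... ⊊ F_k (s = [F_1; ...; F_k]) is the ascending chain of P/E *)
Definition ascending_chain E P (s : seq {subfield Om}) : Prop :=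
  (forall i, (i < size s)%N ->
     is_max_galois_sub (nth E (E :: s) i) P (nth E s i) /\
     nth E (E :: s) i != nth E s i) /\
  is_max_galois_sub (last E s) P (last E s).

End Defs.

(* Main.v *)
Require Import Defs.
From HB Require Import structures.
From mathcomp Require Import all_boot all_order all_algebra all_fingroup all_field.
From Stdlib Require Import Classical.
Set Implicit Arguments. Unset Strict Implicit. Unset Printing Implicit Defensive.
Import GRing.Theory.
Local Open Scope ring_scope.

Section Corr.
Variables (K : fieldType) (Om : splittingFieldType K).
Variable E : {subfield Om}.
Hypothesis galE : galois 1%AS E.

Lemma galZE (Z : {subfield Om}) : (Z <= E)%VS -> galois Z E.
Proof. by move=> sZE; apply: (galoisS _ galE); rewrite sub1v sZE. Qed.

Lemma fixgal (Z : {subfield Om}) : (Z <= E)%VS -> fixedField ('Gal(E / Z))%g = Z.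
Proof. by move=> sZE; apply/galois_fixedField/galZE. Qed.

Lemma gal_subP (Z1 Z2 : {subfield Om}) : (Z1 <= E)%VS -> (Z2 <= E)%VS ->
  (Z1 <= Z2)%VS = ('Gal(E / Z2) \subset 'Gal(E / Z1))%g.
Proof.
move=> s1 s2; apply/idP/idP; first exact: galS.
by move/fixedFieldS; rewrite !fixgal.
Qed.

Lemma gal_inj (Z1 Z2 : {subfield Om}) : (Z1 <= E)%VS -> (Z2 <= E)%VS ->
  'Gal(E / Z1)%g = 'Gal(E / Z2)%g -> Z1 = Z2.
Proof.
move=> s1 s2 eq12; apply: val_inj => /=.
by rewrite -(fixgal s1) -(fixgal s2) eq12.
Qed.

Lemma gal_prod (Z1 Z2 : {subfield Om}) : (Z1 <= E)%VS -> (Z2 <= E)%VS ->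
  'Gal(E / (Z1 * Z2)%AS)%g = ('Gal(E / Z1) :&: 'Gal(E / Z2))%g.
Proof.
move=> s1 s2; have s12 : ((Z1 * Z2)%AS <= E)%VS by apply: prodv_sub.
apply/setP => x; rewrite inE -!sub1set !galois_connection //.
apply/idP/andP => [h | [h1 h2]].
  by split; apply: subv_trans h; [apply: field_subvMr | apply: field_subvMl].
exact: prodv_sub.
Qed.

Lemma gal_normal (C Z : {subfield Om}) : (C <= Z)%VS -> (Z <= E)%VS ->
  galois C Z = ('Gal(E / Z) <| 'Gal(E / C))%g.
Proof.
move=> sCZ sZE; have sCE := subv_trans sCZ sZE.
apply/idP/idP => [gCZ | nZ].
  apply: normalField_normal; first by rewrite sCZ sZE.
  by case/and3P: gCZ.
by rewrite -(fixgal sZE); apply: normal_fixedField_galois => //; apply: galZE.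
Qed.

Lemma galois_refl' (C : {subfield Om}) : (C <= E)%VS -> galois C C.
Proof. by move=> sCE; rewrite gal_normal // normal_refl. Qed.

Lemma gal_top : 'Gal(E / E)%g = 1%g.
Proof.
apply: card_le1_trivg; rewrite -galois_dim ?galois_refl' //.
by rewrite divnn adim_gt0.
Qed.


Lemma max_contains (C P X Y : {subfield Om}) : (P <= E)%VS ->
  is_max_galois_sub C P X -> (Y <= P)%VS -> galois C Y -> (Y <= X)%VS.
Proof.
move=> sPE [sXP gCX hmax] sYP gCY.
have sXE := subv_trans sXP sPE; have sYE := subv_trans sYP sPE.
have sZP : ((X * Y)%AS <= P)%VS by apply: prodv_sub.
have sZE := subv_trans sZP sPE.
have sCX : (C <= X)%VS by case/and3P: gCX.
have sCY : (C <= Y)%VS by case/and3P: gCY.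
have sXZ : (X <= (X * Y)%AS)%VS by apply: field_subvMr.
have sYZ : (Y <= (X * Y)%AS)%VS by apply: field_subvMl.
have gCZ : galois C (X * Y)%AS.
  rewrite gal_normal ?(subv_trans sCX sXZ) // gal_prod //.
  by apply: normalI; rewrite -gal_normal.
have := hmax _ sZP gCZ.
have hdX := dim_sup_field sCX; have hdZ := dim_sup_field (subv_trans sCX sXZ).
have : (\dim ((X * Y)%AS) <= \dim X)%N -> (X : {vspace Om}) == (X * Y)%AS.
  by move=> h; rewrite eqEdim sXZ h.
move=> himp hle.
have /eqP -> // : (X : {vspace Om}) == (X * Y)%AS.
by apply: himp; rewrite hdX hdZ leq_mul2r hle orbT.
Qed.

Lemma max_uniq (C P X X' : {subfield Om}) : (P <= E)%VS ->
  is_max_galois_sub C P X -> is_max_galois_sub C P X' -> X = X'.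
Proof.
move=> sPE hX hX'; apply: val_inj; apply: subv_anti.
have [sXP gX _] := hX; have [sX'P gX' _] := hX'.
by rewrite (max_contains sPE hX sX'P gX') (max_contains sPE hX' sXP gX).
Qed.

Lemma max_exists (B P : {subfield Om}) : (B <= P)%VS -> (P <= E)%VS ->
  exists X, is_max_galois_sub B P X.
Proof.
move=> sBP sPE; apply: NNPP => hn.
have step : forall Y : {subfield Om}, (Y <= P)%VS -> galois B Y ->
    exists Y' : {subfield Om}, [/\ (Y' <= P)%VS, galois B Y' &
       (\dim_B Y < \dim_B Y')%N].
  move=> Y sYP gY; apply: NNPP => hn2; apply: hn; exists Y; split => //.
  move=> Y' sY'P gY'; rewrite leqNgt; apply/negP => hlt.
  by apply: hn2; exists Y'.
have big : forall n, exists Y : {subfield Om},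
    [/\ (Y <= P)%VS, galois B Y & (n <= \dim_B Y)%N].
  elim=> [|n [Y [sYP gY hn']]].
    by exists B; split => //; apply: galois_refl'; apply: subv_trans sPE.
  have [Y' [sY'P gY' hlt]] := step Y sYP gY.
  by exists Y'; split => //; apply: leq_ltn_trans hlt.
have [Y [sYP _ hle]] := big (\dim P).+1.
have : (\dim_B Y <= \dim P)%N.
  by apply: leq_trans (leq_div _ _) (dimvS sYP).
by rewrite leqNgt hle.
Qed.

End Corr.

Section Compositum.
Variables (K : fieldType) (Om : splittingFieldType K).

Lemma galois_comp (A B : {subfield Om}) :
  galois 1%AS A -> galois 1%AS B -> galois 1%AS (A * B)%AS.
Proof.
move=> gA gB; have [_ sepA nA] := and3P gA; have [_ sepB nB] := and3P gB.
apply/and3P; split; first exact: sub1v.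
  apply: (separable_trans sepA).
  have sub : ((A * B)%AS <= <<A & vbasis B>>%AS)%VS.
    apply: prodv_sub; first exact: subv_adjoin_seq.
    rewrite -{1}(span_basis (vbasisP B)); apply/span_subvP.
    exact: seqv_sub_adjoin.
  apply: (separableSr sub); apply: separable_Fadjoin_seq.
  apply/allP => y /vbasis_mem yB; apply: (separable_elementS (sub1v _)).
  exact: (separableP sepB).
apply/forall_inP => x hx /=.
rewrite aimgM.
by rewrite (eqP (forall_inP nA x hx)) (eqP (forall_inP nB x hx)).
Qed.
End Compositum.

Section Mag.
Variables (K : fieldType) (Om : splittingFieldType K).
Variables (Lt F L : {subfield Om}).
Hypotheses (galLt : galois 1%AS Lt) (galF : galois 1%AS F) (sLLt : (L <= Lt)%VS).
Hypothesis hdim : \dim (Lt * F)%AS = (\dim Lt * \dim F)%N.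

Let E := (Lt * F)%AS.
Let galE : galois 1%AS E := galois_comp galLt galF.
Let sLtE : (Lt <= E)%VS := field_subvMr _ _.
Let sFE : (F <= E)%VS := field_subvMl _ _.
Let sLE : (L <= E)%VS := subv_trans sLLt sLtE.

Local Notation G := ('Gal(E / 1%AS))%G.
Local Notation P := ('Gal(E / Lt))%G.
Local Notation Q := ('Gal(E / F))%G.

Lemma PnG : (P <| G)%g.
Proof. rewrite -(gal_normal galE) ?sub1v //. Qed.

Lemma QnG : (Q <| G)%g.
Proof. by rewrite -(gal_normal galE) ?sub1v. Qed.

Lemma PQ1 : (P :&: Q)%g = 1%g.
Proof. by rewrite -gal_prod // (gal_top galE). Qed.

Lemma PQG : (P * Q)%g = G.
Proof.
apply/eqP; rewrite eqEcard mulG_subG !normal_sub ?PnG ?QnG //=.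
rewrite TI_cardMg ?PQ1 //.
rewrite -!(galois_dim (galZE galE _)) ?sub1v //.
have dLt := dim_sup_field sLtE; have dF := dim_sup_field sFE.
have dLt0 := adim_gt0 Lt; have dF0 := adim_gt0 F.
have e1 : \dim_Lt E = \dim F.
  by apply/eqP; rewrite -(eqn_pmul2r dLt0) -dLt /E hdim mulnC.
have e2 : \dim_F E = \dim Lt.
  by apply/eqP; rewrite -(eqn_pmul2r dF0) -dF /E hdim.
by rewrite e1 e2 dimv1 divn1 /E hdim mulnC.
Qed.

Lemma QPG : (Q * P)%g = G.
Proof.
rewrite (normC (subset_trans (normal_sub QnG) (normal_norm PnG))).
exact: PQG.
Qed.

Lemma modP (Z : {subfield Om}) : (Z <= Lt)%VS ->
  (('Gal(E / Z) :&: Q) * P)%g = 'Gal(E / Z)%g.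
Proof.
move=> sZ; rewrite (group_modr _ (galS E sZ)) QPG.
by apply/setIidPl; apply: galS; apply: sub1v.
Qed.

Lemma main_fwd (B C X : {subfield Om}) : (B <= L)%VS -> (B <= C)%VS ->
  (C <= (B * F)%AS)%VS ->
  is_max_galois_sub B L X -> is_max_galois_sub C (L * F)%AS (X * F)%AS.
Proof.
move=> sBL sBC sCBF hX; have [sXL gBX _] := hX.
have sBX : (B <= X)%VS by case/and3P: gBX.
have sBLt := subv_trans sBL sLLt; have sXLt := subv_trans sXL sLLt.
have sBE := subv_trans sBLt sLtE; have sXE := subv_trans sXLt sLtE.
have sBFE : ((B * F)%AS <= E)%VS by apply: prodvSl.
have sCE := subv_trans sCBF sBFE.
have sXFE : ((X * F)%AS <= E)%VS by apply: prodvSl.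
have sME : ((L * F)%AS <= E)%VS by apply: prodvSl.
have sCXF : (C <= (X * F)%AS)%VS by apply: subv_trans sCBF (prodvSl _ sBX).
have nX : ('Gal(E / X) <| 'Gal(E / B))%g by rewrite -(gal_normal galE).
have gCN : forall H : {set gal_of E}, (H <| G)%g -> ('Gal(E / C) \subset 'N(H))%g.
  by move=> H nH; apply: subset_trans (normal_norm nH); apply: galS; apply: sub1v.
have gCXF : galois C (X * F)%AS.
  rewrite (gal_normal galE) // gal_prod //; apply/andP; split.
    by rewrite -gal_prod //; apply: galS.
  apply: normsI; last exact: gCN QnG.
  exact: subset_trans (galS E sBC) (normal_norm nX).
split => //; first exact: prodvSl.
move=> Y sYM gCY.
have sYE := subv_trans sYM sME.
have sCY : (C <= Y)%VS by case/and3P: gCY.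
have nY : ('Gal(E / Y) <| 'Gal(E / C))%g by rewrite -(gal_normal galE).
pose N := ('Gal(E / Y) :&: Q)%G.
have sNQ : (N \subset Q)%g := subsetIr _ _.
have sNG : (N \subset G)%g := subset_trans sNQ (normal_sub QnG).
have nPN : (N \subset 'N(P))%g := subset_trans sNG (normal_norm PnG).
pose J := (N <*> P)%G.
have eJ : (J :=: N * P)%g := norm_joinEl nPN.
pose A := fixedField_aspace J.
have gA : 'Gal(E / A)%g = J := gal_fixedField J.
have sAE : (A <= E)%VS := fixedField_bound J.
have sAL : (A <= L)%VS.
  rewrite (gal_subP galE sAE sLE) gA -(modP sLLt) eJ; apply: mulSg.
  have := galS E sYM; rewrite gal_prod // => h.
  by rewrite subsetI h subsetIr.
have sNgB : (N \subset 'Gal(E / B))%g.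
  apply: subset_trans (subsetIl _ _) _.
  exact: subset_trans (galS E sCY) (galS E sBC).
have sJgB : (J \subset 'Gal(E / B))%g.
  by rewrite join_subG sNgB; apply: galS.
have sBA : (B <= A)%VS by rewrite (gal_subP galE sBE sAE) gA.
have gBA : galois B A.
  rewrite (gal_normal galE sBA sAE) gA; apply/andP; split => //.
  rewrite -(modP sBLt); apply: mul_subG; last first.
    exact: subset_trans (joing_subr N P) (normG J).
  rewrite -gal_prod //; apply: subset_trans (galS E sCBF) _.
  apply: normsY; last exact: gCN PnG.
  by apply: normsI; [apply: normal_norm | apply: gCN QnG].
have sAX := max_contains galE sLE hX sAL gBA.
have sXJ : ('Gal(E / X) \subset J)%g by rewrite -gA -(gal_subP galE sAE sXE).
have sXFY : ('Gal(E / (X * F)%AS) \subset 'Gal(E / Y))%g.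
  rewrite gal_prod //; apply: subset_trans (setSI _ sXJ) _.
  rewrite eJ -(group_modl _ sNQ) PQ1 mulg1; exact: subsetIl.
have sYXF : (Y <= (X * F)%AS)%VS by rewrite (gal_subP galE sYE sXFE).
exact: leq_div2r (dimvS sYXF).
Qed.

Lemma injF (X1 X2 : {subfield Om}) : (X1 <= Lt)%VS -> (X2 <= Lt)%VS ->
  (X1 * F)%AS = (X2 * F)%AS -> X1 = X2.
Proof.
move=> s1 s2 e.
apply: (gal_inj galE (subv_trans s1 sLtE) (subv_trans s2 sLtE)).
rewrite -(modP s1) -(modP s2) -!gal_prod ?e //.
  exact: subv_trans s2 sLtE.
exact: subv_trans s1 sLtE.
Qed.

Lemma stepS (B C X : {subfield Om}) : (B <= L)%VS -> (B <= C)%VS ->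
  (C <= (B * F)%AS)%VS -> (X <= L)%VS ->
  is_max_galois_sub B L X <-> is_max_galois_sub C (L * F)%AS (X * F)%AS.
Proof.
move=> sBL sBC sCBF sXL; split; first exact: main_fwd.
move=> h; have [X0 h0] := max_exists galE sBL sLE.
have h0' := main_fwd sBL sBC sCBF h0.
have sME : ((L * F)%AS <= E)%VS by apply: prodvSl.
have e := max_uniq galE sME h h0'.
have [sX0L _ _] := h0.
by rewrite (injF (subv_trans sXL sLLt) (subv_trans sX0L sLLt) e).
Qed.

End Mag.

Unset Implicit Arguments.

Theorem theorem8p16 (K : fieldType) (Om : splittingFieldType K)
  (L F M : {subfield Om}) :
  perfect_field K ->
  strong_cluster_magnification L F M ->
  ~ ascending_index 1%AS L 1 ->
  (forall F1 : {subfield Om}, is_max_galois_sub 1%AS L F1 ->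
     forall F' : {subfield Om},
       is_max_galois_sub 1%AS M F' <-> F' = (F1 * F)%AS) /\
  (forall s : seq {subfield Om}, {in s, forall X : {subfield Om}, (X <= L)%VS} ->
     ascending_chain 1%AS L s <->
     ascending_chain 1%AS M (map (fun X : {subfield Om} => (X * F)%AS) s)).
Proof.
move=> _ [_ galF [Lt [[sLLt galLt _] [_ _ hd]]] eM] hasc.
rewrite dimv1 !divn1 in hd.
subst M.
have galE := galois_comp galLt galF.
have sLE : (L <= (Lt * F)%AS)%VS := subv_trans sLLt (field_subvMr _ _).
have sME : ((L * F)%AS <= (Lt * F)%AS)%VS by apply: prodvSl.
have S := stepS galLt galF sLLt hd.
have S1 : forall X : {subfield Om}, (X <= L)%VS ->
    is_max_galois_sub 1%AS L X <-> is_max_galois_sub 1%AS (L * F)%AS (X * F)%AS.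
  by move=> X sXL; apply: S => //; apply: sub1v.
have no1 : forall X : {subfield Om}, is_max_galois_sub 1%AS L X -> X <> 1%AS.
  by move=> X hX eX; apply: hasc; exists X; split => //; rewrite eX dimv1 divn1.
have sub1 : forall X : {subfield Om}, (X <= 1%AS)%VS -> X = 1%AS.
  by move=> X hX; apply: val_inj; apply: subv_anti; rewrite hX sub1v.
split.
  move=> F1 hF1 F'; have [sF1L _ _] := hF1.
  have h1 := (S1 _ sF1L).1 hF1.
  split => [h | ->] //.
  exact: (max_uniq galE sME h h1).
move=> s hs.
set f := fun X : {subfield Om} => (X * F)%AS.
have key : forall i, (i < size s)%N ->
   (is_max_galois_sub (nth 1%AS (1%AS :: s) i) L (nth 1%AS s i) /\
    nth 1%AS (1%AS :: s) i != nth 1%AS s i) <->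
   (is_max_galois_sub (nth 1%AS (1%AS :: map f s) i) (L * F)%AS
      (nth 1%AS (map f s) i) /\
    nth 1%AS (1%AS :: map f s) i != nth 1%AS (map f s) i).
  move=> i hi; rewrite (nth_map 1%AS) //.
  have sXL : (nth 1%AS s i <= L)%VS by apply: hs; apply: mem_nth.
  case: i hi sXL => [|j] hi sXL /=.
    split => [[h ne] | [h ne]]; split.
    - exact: (S1 _ sXL).1.
    - apply: contra ne => /eqP e; apply/eqP; apply: esym; apply: sub1.
      by have : (nth 1%AS s 0 <= f (nth 1%AS s 0))%VS := field_subvMr _ _; rewrite -e.
    - exact: (S1 _ sXL).2.
    - apply/eqP => e; apply: (no1 _ ((S1 _ sXL).2 h)); by rewrite -e.
  have hj : (j < size s)%N by apply: ltnW.
  rewrite (nth_map 1%AS) //.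
  have sBL : (nth 1%AS s j <= L)%VS by apply: hs; apply: mem_nth.
  have SS := S (nth 1%AS s j) (f (nth 1%AS s j)) (nth 1%AS s j.+1) sBL
     (field_subvMr _ _) (subvv _) sXL.
  split => [[h ne] | [h ne]]; split.
  - exact: SS.1.
  - by apply: contra ne => /eqP e; apply/eqP;
      apply: (injF galLt galF hd (subv_trans sBL sLLt) (subv_trans sXL sLLt)).
  - exact: SS.2.
  - by apply: contra ne => /eqP ->.
have lastkey : is_max_galois_sub (last 1%AS s) L (last 1%AS s) <->
    is_max_galois_sub (last 1%AS (map f s)) (L * F)%AS (last 1%AS (map f s)).
  case: s hs {key} => [|x t] hs /=.
    split => [h | h]; first by case: (no1 _ h erefl).
    have [X0 h0] := max_exists galE (sub1v L) sLE.
    have [sX0L _ _] := h0.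
    have e := max_uniq galE sME h ((S1 _ sX0L).1 h0).
    exfalso; apply: (no1 _ h0); apply: sub1.
    by have : (X0 <= (X0 * F)%AS)%VS := field_subvMr _ _; rewrite -e.
  rewrite last_map.
  have sLast : (last x t <= L)%VS by apply: hs; apply: mem_last.
  exact: (S _ _ _ sLast (field_subvMr _ _) (subvv _) sLast).
rewrite /ascending_chain size_map.
split => [[h1 h2] | [h1 h2]]; split.
- by move=> i hi; apply/(key i hi)/h1.
- exact: lastkey.1.
- by move=> i hi; apply/(key i hi)/h1.
- exact: lastkey.2.
Qed.
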